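(* (1) For every nilpotent $n\times n$ matrix $A$ over $\mathbb{F}$ and every integer $k$ with $0\le k\le n/2$, there exists an $n\times n$ matrix $B$ commuting with $A$ such that $B^2=0$ and $\mathrm{rk}\,B=k$. (2) If $A$ and $B$ are nilpotent $n\times n$ matrices over $\mathbb{F}$, then for each integer $k$ with $0\le k\le n/2$ there exist an $n\times n$ matrix $C$ with $C^2=0$ and $\mathrm{rk}\,C=k$, and an invertible $P\in GL_n(\mathbb{F})$, such that $C$ commutes with $A$ and $PCP^{-1}$ commutes with $B$.
   Context: $\mathbb{F}$ is an algebraically closed field of characteristic $0$. *)

(* Defs.v *)
From HB Require Import structures.
From mathcomp Require Import all_boot all_order all_algebra.
Set Implicit Arguments. Unset Strict Implicit. Unset Printing Implicit Defensive.
Import GRing.Theory.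
Local Open Scope ring_scope.

Definition nilpotent_mx (F : fieldType) (n : nat) (A : 'M[F]_n) : Prop :=
  exists m : nat, A ^+ m = 0.

(* Main.v *)
Require Import Defs.
From HB Require Import structures.
From mathcomp Require Import all_boot all_order all_algebra.
From mathcomp Require Import fingroup perm zify.
Set Implicit Arguments. Unset Strict Implicit. Unset Printing Implicit Defensive.
Import GRing.Theory.
Local Open Scope ring_scope.

Section Cyc.
Variable F : fieldType.
Variable n : nat.
Variable A : 'M[F]_n.

Definition kry m (w : 'rV[F]_n) : 'M_(m, n) := \matrix_(i < m) (w *m A ^+ i).
Definition kcol m (f : 'cV[F]_n) : 'M_(n, m) := \matrix_(i < n, j < m) (A ^+ j *m f) i 0.
Definition shr m : 'M[F]_m := \matrix_(i, j) ((i.+1 == j :> nat)%:R).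

Lemma shrE m p (M : 'M[F]_(m, p)) i j :
  (shr m *m M) i j = if (i.+1 < m)%N then M (insubd i i.+1) j else 0.
Proof.
rewrite mxE; case: ltnP => h.
  rewrite (bigD1 (insubd i i.+1)) //= big1 ?addr0.
    by rewrite mxE insubdK // eqxx mul1r.
  move=> k hk; rewrite mxE; case: eqP => [e|]; last by rewrite mul0r.
  by case/eqP: hk; apply: val_inj; rewrite /= insubdK // e.
rewrite big1 // => k _; rewrite mxE; case: eqP => [e|]; last by rewrite mul0r.
by have := ltn_ord k; rewrite -e ltnNge h.
Qed.

Lemma shrtE m p (M : 'M[F]_(p, m)) i j :
  (M *m (shr m)^T) i j = if (j.+1 < m)%N then M i (insubd j j.+1) else 0.
Proof.
rewrite -[M *m _]trmxK trmx_mul trmxK mxE shrE.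
by case: ifP => _; rewrite // mxE.
Qed.

Lemma kryE m w i j : kry m w i j = (w *m A ^+ i) 0 j.
Proof. by rewrite mxE. Qed.

Lemma kry_mulA m w : w *m A ^+ m = 0 -> kry m w *m A = shr m *m kry m w.
Proof.
move=> wm; apply/matrixP => i j; rewrite shrE.
have -> : (kry m w *m A) i j = (w *m A ^+ i.+1) 0 j.
  by rewrite exprSr mulmxA mxE [RHS]mxE; apply: eq_bigr => k _; rewrite mxE.
case: ltnP => h.
  have e : (insubd i i.+1 : nat) = i.+1 := insubdK i h.
  by rewrite kryE e.
have -> : i.+1 = m by apply/eqP; rewrite eqn_leq h ltn_ord.
by rewrite wm mxE.
Qed.

Lemma kcol_mulA m f : A ^+ m *m f = 0 -> A *m kcol m f = kcol m f *m (shr m)^T.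
Proof.
move=> fm; apply/matrixP => i j; rewrite shrtE.
have -> : (A *m kcol m f) i j = (A ^+ j.+1 *m f) i 0.
  by rewrite exprS -mulmxA mxE [RHS]mxE; apply: eq_bigr => k _; rewrite mxE.
case: ltnP => h.
  have e : (insubd j j.+1 : nat) = j.+1 := insubdK j h.
  by rewrite [in RHS]mxE e.
have -> : j.+1 = m by apply/eqP; rewrite eqn_leq h ltn_ord.
by rewrite fm mxE.
Qed.

Lemma hankelE m w f i j :
  (kry m w *m kcol m f) i j = (w *m A ^+ (i + j) *m f) 0 0.
Proof.
rewrite exprD mulmxA -[_ *m A ^+ j *m f]mulmxA !mxE.
by apply: eq_bigr => k _; rewrite !mxE.
Qed.


Lemma wexp0 m e (w : 'rV[F]_n) : w *m A ^+ m = 0 -> (m <= e)%N -> w *m A ^+ e = 0.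
Proof. by move=> h le; rewrite -(subnKC le) exprD mulmxA h mul0mx. Qed.

Lemma hankel_unit m w f : w *m A ^+ m = 0 -> (w *m A ^+ m.-1 *m f) 0 0 != 0 ->
  kry m w *m kcol m f \in unitmx.
Proof.
move=> wm nz.
set H := kry m w *m kcol m f.
pose s := perm (@rev_ord_inj m).
have tr : is_trig_mx (row_perm s H).
  apply/is_trig_mxP => i j lij.
  rewrite mxE hankelE permE /= (wexp0 wm) ?mul0mx ?mxE //.
  by move: (ltn_ord j) lij; lia.
have : \det (row_perm s H) != 0.
  rewrite (det_trig tr); apply/prodf_neq0 => i _.
  rewrite mxE hankelE permE /=.
  suff -> : (m - i.+1 + i = m.-1)%N by [].
  by move: (ltn_ord i); lia.
by rewrite row_permE det_mulmx mulf_eq0 negb_or unitmxE unitfE => /andP[].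
Qed.


Lemma commX (M : 'M[F]_n) i : A *m M = M *m A -> A ^+ i *m M = M *m A ^+ i.
Proof.
move=> c; elim: i => [|i IH]; first by rewrite expr0 mul1mx mulmx1.
by rewrite exprS mulmxE -mulrA -mulmxE IH mulmxE mulrA -mulmxE c mulmxE mulrA.
Qed.

Lemma kry_mulr m w (M : 'M[F]_n) : A *m M = M *m A -> kry m w *m M = kry m (w *m M).
Proof.
move=> c; apply/row_matrixP => i; rewrite row_mul !rowK -!mulmxA; congr (_ *m _).
exact: commX.
Qed.

Lemma kcol_mull m f (M : 'M[F]_n) : A *m M = M *m A -> M *m kcol m f = kcol m (M *m f).
Proof.
move=> c; apply/matrixP => i j.
have -> : (M *m kcol m f) i j = (M *m (A ^+ j *m f)) i 0.
  by rewrite !mxE; apply: eq_bigr => k _; rewrite mxE.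
by rewrite [RHS]mxE mulmxA -commX // -mulmxA.
Qed.

Lemma kry0 m : kry m 0 = 0.
Proof. by apply/matrixP => i j; rewrite kryE mul0mx !mxE. Qed.

Definition T m g f w := kcol m f *m invmx (kry m g *m kcol m f) *m kry m w.

Section Piece.
Variables (m : nat) (g : 'rV[F]_n) (f : 'cV[F]_n).
Hypotheses (Hg : g *m A ^+ m = 0) (Hf : A ^+ m *m f = 0)
  (Hnz : (g *m A ^+ m.-1 *m f) 0 0 != 0).

Let H := kry m g *m kcol m f.
Let Hu : H \in unitmx. Proof. exact: hankel_unit. Qed.

Lemma kry_T w : kry m g *m T m g f w = kry m w.
Proof. by rewrite /T !mulmxA -/H mulmxV // mul1mx. Qed.

Lemma T_comm w : w *m A ^+ m = 0 -> A *m T m g f w = T m g f w *m A.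
Proof.
move=> wm.
have hs : invmx H *m shr m = (shr m)^T *m invmx H.
  have e : shr m *m H = H *m (shr m)^T.
    by rewrite /H mulmxA -kry_mulA // -!mulmxA kcol_mulA.
  apply: (canLR (mulKmx Hu)); rewrite mulmxA -e -mulmxA mulmxV // mulmx1.
  by [].
rewrite /T !mulmxA kcol_mulA // -!mulmxA; congr (_ *m _).
by rewrite kry_mulA // !mulmxA hs.
Qed.

Lemma T_mulr w (M : 'M[F]_n) : A *m M = M *m A -> T m g f w *m M = T m g f (w *m M).
Proof. by move=> c; rewrite /T -mulmxA kry_mulr. Qed.

Lemma g_T w : (0 < m)%N -> g *m T m g f w = w.
Proof.
move=> m0; have := congr1 (row (Ordinal m0)) (kry_T w).
by rewrite row_mul !rowK !expr0 !mulmx1.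
Qed.

Lemma T_eqmx w : (T m g f w :=: kry m w)%MS.
Proof.
apply/eqmxP; rewrite submxMl /=.
by rewrite -{1}kry_T submxMl.
Qed.

Lemma T0 : T m g f 0 = 0.
Proof. by rewrite /T kry0 mulmx0. Qed.

Lemma ET w : T m g f g *m T m g f w = T m g f w.
Proof. by rewrite {1}/T -!mulmxA kry_T /T mulmxA. Qed.

Lemma outer_T E w : A *m E = E *m A -> E *m f = f -> E *m T m g f w = T m g f w.
Proof. by move=> c ef; rewrite /T !mulmxA kcol_mull // ef. Qed.

End Piece.

Lemma kry_sub m w j : w *m A ^+ m = 0 -> (w *m A ^+ j <= kry m w)%MS.
Proof.
move=> wm; case: (ltnP j m) => h.
  by have := row_sub (Ordinal h) (kry m w); rewrite rowK.
by rewrite (wexp0 wm h) sub0mx.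
Qed.

Lemma rank_kry m c w : (c <= m)%N -> w *m A ^+ c = 0 ->
  ((0 < c)%N -> w *m A ^+ c.-1 != 0) -> \rank (kry m w) = c.
Proof.
move=> cm wc nz; apply/eqP; rewrite eqn_leq; apply/andP; split.
  apply: leq_trans (rank_leq_row (kry c w)); apply: mxrankS.
  by apply/row_subP => i; rewrite rowK kry_sub.
case: c cm wc nz => [//|c] cm wc /(_ isT) nz.
have [j hj] : exists j, (w *m A ^+ c) 0 j != 0.
  apply/existsP; move: nz; apply: contraR; rewrite negb_exists => /forallP h.
  by apply/eqP/rowP => k; rewrite [RHS]mxE; apply/eqP; have := h k; rewrite negbK.
have hu := @hankel_unit c.+1 w (delta_mx j 0) wc.
have : (w *m A ^+ c *m (delta_mx j 0 : 'cV_n)) 0 0 != 0.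
  by rewrite -colE mxE.
move/hu => u.
have := mxrankM_maxl (kry c.+1 w) (kcol c.+1 (delta_mx j 0)).
rewrite mxrank_unit // => le; apply: leq_trans le _; apply: mxrankS.
by apply/row_subP => i; rewrite rowK kry_sub // (wexp0 wc).
Qed.

End Cyc.

Section Main.
Variable F : fieldType.
Variable n : nat.
Variable A : 'M[F]_n.

Lemma mulA_expD p (w : 'M[F]_(p, n)) i j : w *m A ^+ i *m A ^+ j = w *m A ^+ (i + j).
Proof. by rewrite exprD -mulmxA mulmxE. Qed.

Definition Pk (E : 'M[F]_n) k := exists B : 'M[F]_n,
  [/\ A *m B = B *m A, B *m B = 0, \rank B = k, E *m B = B & B *m E = B].

Lemma Pk0 E : Pk E 0.
Proof. by exists 0; split; rewrite ?mulmx0 ?mul0mx ?mxrank0. Qed.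

Lemma rank_orth (E1 E2 X1 X2 : 'M[F]_n) :
  E1 *m E2 = 0 -> E2 *m E1 = 0 -> E1 *m X1 = X1 -> X1 *m E1 = X1 ->
  E2 *m X2 = X2 -> X2 *m E2 = X2 -> \rank (X1 + X2)%R = (\rank X1 + \rank X2)%N.
Proof.
move=> o12 o21 l1 r1 l2 r2.
have e1 : E1 *m (X1 + X2) = X1 by rewrite mulmxDr l1 -l2 mulmxA o12 mul0mx addr0.
have e2 : E2 *m (X1 + X2) = X2 by rewrite mulmxDr l2 -l1 mulmxA o21 mul0mx add0r.
have eq : ((X1 + X2)%R == X1 + X2)%MS.
  apply/andP; split; first exact: addmx_sub_adds (submx_refl _) (submx_refl _).
  by rewrite addsmx_sub; apply/andP; split; [rewrite -{1}e1 | rewrite -{1}e2]; exact: submxMl.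
rewrite (eqmx_rank eq) mxrank_disjoint_sum //.
apply/eqP; rewrite -submx0; set C := (X1 :&: X2)%MS.
have [D1 h1] := submxP (capmxSl X1 X2).
have [D2 h2] := submxP (capmxSr X1 X2).
have c1 : C *m E1 = C by rewrite /C h1 -mulmxA r1.
have c2 : C *m E2 = C by rewrite /C h2 -mulmxA r2.
by rewrite -c1 -c2 -mulmxA o21 mulmx0 sub0mx.
Qed.

Lemma Pk_add E1 E2 k1 k2 : E1 *m E2 = 0 -> E2 *m E1 = 0 ->
  Pk E1 k1 -> Pk E2 k2 -> Pk (E1 + E2) (k1 + k2).
Proof.
move=> o12 o21 [B1 [c1 s1 r1 l1 rr1]] [B2 [c2 s2 r2 l2 rr2]].
have x12 : B1 *m B2 = 0 by rewrite -rr1 -l2 mulmxA -(mulmxA B1) o12 mulmx0 mul0mx.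
have x21 : B2 *m B1 = 0 by rewrite -rr2 -l1 mulmxA -(mulmxA B2) o21 mulmx0 mul0mx.
have y12 : E1 *m B2 = 0 by rewrite -l2 mulmxA o12 mul0mx.
have y21 : E2 *m B1 = 0 by rewrite -l1 mulmxA o21 mul0mx.
have z12 : B1 *m E2 = 0 by rewrite -rr1 -mulmxA o12 mulmx0.
have z21 : B2 *m E1 = 0 by rewrite -rr2 -mulmxA o21 mulmx0.
exists (B1 + B2); split.
- by rewrite mulmxDr mulmxDl c1 c2.
- by rewrite mulmxDr !mulmxDl s1 s2 x12 x21 !addr0.
- by rewrite (rank_orth o12 o21 l1 rr1 l2 rr2) r1 r2.
- by rewrite mulmxDr !mulmxDl l1 l2 y12 y21 addr0 add0r.
- by rewrite mulmxDr !mulmxDl rr1 rr2 z12 z21 addr0 add0r.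
Qed.

Lemma idem_add (E1 E2 : 'M[F]_n) : E1 *m E1 = E1 -> E2 *m E2 = E2 ->
  E1 *m E2 = 0 -> E2 *m E1 = 0 -> (E1 + E2) *m (E1 + E2) = E1 + E2.
Proof. by move=> i1 i2 o12 o21; rewrite mulmxDr !mulmxDl i1 i2 o12 o21 addr0 add0r. Qed.

Lemma rank_idem_add (E1 E2 : 'M[F]_n) : E1 *m E1 = E1 -> E2 *m E2 = E2 ->
  E1 *m E2 = 0 -> E2 *m E1 = 0 -> \rank (E1 + E2)%R = (\rank E1 + \rank E2)%N.
Proof. by move=> i1 i2 o12 o21; apply: (rank_orth o12 o21). Qed.


Section PieceP.
Variables (m : nat) (g : 'rV[F]_n) (f : 'cV[F]_n).
Hypotheses (Hg : g *m A ^+ m = 0) (Hf : A ^+ m *m f = 0)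
  (Hnz : (g *m A ^+ m.-1 *m f) 0 0 != 0) (m0 : (0 < m)%N).

Let E1 := T A m g f g.

Lemma gnz : g *m A ^+ m.-1 != 0.
Proof. by apply: contra Hnz => /eqP ->; rewrite mul0mx mxE. Qed.

Lemma E1_comm : A *m E1 = E1 *m A.
Proof. exact: T_comm. Qed.

Lemma E1_idem : E1 *m E1 = E1.
Proof. exact: ET. Qed.

Lemma gE1 : g *m E1 = g.
Proof. exact: g_T. Qed.

Lemma E1_rank : \rank E1 = m.
Proof.
rewrite /E1 (T_eqmx Hg Hnz g) (@rank_kry _ _ A m m) //.
by move=> _; exact: gnz.
Qed.

Lemma TE1 w : w *m A ^+ m = 0 -> w *m E1 = w -> T A m g f w *m E1 = T A m g f w.
Proof. by move=> wm we; rewrite T_mulr ?we //; exact: E1_comm. Qed.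

Lemma E1T w : E1 *m T A m g f w = T A m g f w.
Proof. exact: ET. Qed.

Lemma cyc_Pk j : (j.*2 <= m)%N -> Pk E1 j.
Proof.
move=> hj.
pose w := g *m A ^+ (m - j).
have wm : w *m A ^+ m = 0 by rewrite /w mulA_expD (wexp0 Hg) //; lia.
have cB : A *m T A m g f w = T A m g f w *m A by exact: T_comm.
exists (T A m g f w); split => //.
- rewrite T_mulr //.
  have -> : w *m T A m g f w = 0.
    rewrite {1}/w -mulmxA (commX _ cB) mulmxA g_T // /w mulA_expD (wexp0 Hg) //; lia.
  exact: T0.
- rewrite (T_eqmx Hg Hnz w) (@rank_kry _ _ A m j) //; first lia.
    by rewrite /w mulA_expD subnK ?Hg //; lia.
  move=> j0; rewrite /w mulA_expD.
  have -> : (m - j + j.-1 = m.-1)%N by lia.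
  exact: gnz.
- exact: E1T.
- apply: TE1 => //.
  by rewrite /w -mulmxA (commX _ E1_comm) mulmxA gE1.
Qed.

End PieceP.


Section Pair.
Variables (a b d : nat) (g1 g2 : 'rV[F]_n) (f1 f2 : 'cV[F]_n).
Hypotheses (Hg1 : g1 *m A ^+ a = 0) (Hf1 : A ^+ a *m f1 = 0)
  (Hnz1 : (g1 *m A ^+ a.-1 *m f1) 0 0 != 0)
  (Hg2 : g2 *m A ^+ b = 0) (Hf2 : A ^+ b *m f2 = 0)
  (Hnz2 : (g2 *m A ^+ b.-1 *m f2) 0 0 != 0)
  (b0 : (0 < b)%N) (Hab : a = (b + d + d)%N).

Let E1 := T A a g1 f1 g1.
Let E2 := T A b g2 f2 g2.
Hypotheses (o12 : E1 *m E2 = 0) (o21 : E2 *m E1 = 0).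

Lemma pair_Pk : Pk (E1 + E2) (b + d).
Proof.
have a0 : (0 < a)%N by lia.
pose y := g1 *m A ^+ d + g2.
pose z := - (y *m A ^+ d).
have ya : y *m A ^+ a = 0.
  by rewrite /y mulmxDl mulA_expD !(wexp0 Hg1, wexp0 Hg2) ?addr0 //; lia.
have zb : z *m A ^+ b = 0.
  rewrite /z mulNmx mulA_expD /y mulmxDl mulA_expD.
  by rewrite !(wexp0 Hg1, wexp0 Hg2) ?addr0 ?oppr0 //; lia.
pose B := T A a g1 f1 y + T A b g2 f2 z.
have c1 := E1_comm Hg1 Hf1 Hnz1.
have c2 := E1_comm Hg2 Hf2 Hnz2.
have cB : A *m B = B *m A.
  by rewrite /B mulmxDr mulmxDl (T_comm Hg1 Hf1 Hnz1) // (T_comm Hg2 Hf2 Hnz2).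
have g1E1 : g1 *m E1 = g1 by exact: gE1.
have g2E2 : g2 *m E2 = g2 by exact: gE1.
have g1E2 : g1 *m E2 = 0 by rewrite -g1E1 -mulmxA o12 mulmx0.
have g2E1 : g2 *m E1 = 0 by rewrite -g2E2 -mulmxA o21 mulmx0.
have E2T2 : E2 *m T A b g2 f2 z = T A b g2 f2 z by exact: E1T.
have E1T1 : E1 *m T A a g1 f1 y = T A a g1 f1 y by exact: E1T.
have g1B : g1 *m B = y.
  rewrite /B mulmxDr g_T // -E2T2 mulmxA g1E2 mul0mx addr0 //.
have g2B : g2 *m B = z.
  rewrite /B mulmxDr [g2 *m T A b _ _ _]g_T // -E1T1 mulmxA g2E1 mul0mx add0r //.
have yB : y *m B = 0.
  rewrite {1}/y mulmxDl -mulmxA (commX _ cB) mulmxA g1B g2B /z addrN //.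
have zB : z *m B = 0.
  by rewrite /z mulNmx -mulmxA (commX _ cB) mulmxA yB mul0mx oppr0.
have yE1 : y *m E1 = g1 *m A ^+ d.
  by rewrite /y mulmxDl g2E1 addr0 -mulmxA (commX _ c1) mulmxA g1E1.
have yE2 : y *m E2 = g2.
  by rewrite /y mulmxDl g2E2 -mulmxA (commX _ c2) mulmxA g1E2 mul0mx add0r.
have cE : A *m (E1 + E2) = (E1 + E2) *m A by rewrite mulmxDr mulmxDl c1 c2.
have yE : y *m (E1 + E2) = y by rewrite mulmxDr yE1 yE2.
have zE : z *m (E1 + E2) = z.
  by rewrite /z mulNmx -mulmxA (commX _ cE) mulmxA yE.
exists B; split => //.
- by rewrite {1}/B mulmxDl !T_mulr // yB zB !T0 addr0.
- have eq : (B == kry A a y)%MS.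
    apply/andP; split.
      rewrite /B addmx_sub //; first by rewrite (T_eqmx Hg1 Hnz1 y).
      rewrite (T_eqmx Hg2 Hnz2 z); apply/row_subP => i.
      rewrite rowK /z mulNmx mulA_expD.
      by rewrite (eqmx_opp (y *m A ^+ (d + i))) kry_sub.
    rewrite -(T_eqmx Hg1 Hnz1 y) -E1T1.
    have -> : E1 *m T A a g1 f1 y = E1 *m B.
      by rewrite /B mulmxDr -E2T2 mulmxA o12 mul0mx addr0.
    exact: submxMl.
  rewrite (eqmx_rank eq) (@rank_kry _ _ A a (b + d)) //; first lia.
    rewrite /y mulmxDl mulA_expD !(wexp0 Hg1, wexp0 Hg2) ?addr0 //; lia.
  move=> _; apply/eqP => h.
  have e : g1 *m A ^+ a.-1 = 0.
    have -> : a.-1 = (d + (b + d).-1)%N by lia.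
    by rewrite -mulA_expD -yE1 -mulmxA -(commX _ c1) mulmxA h mul0mx.
  by move: (gnz Hnz1); rewrite e eqxx.
- have x1 : E1 *m T A b g2 f2 z = 0 by rewrite -E2T2 mulmxA o12 mul0mx.
  have x2 : E2 *m T A a g1 f1 y = 0 by rewrite -E1T1 mulmxA o21 mul0mx.
  by rewrite /B mulmxDl !mulmxDr E1T1 E2T2 x1 x2 addr0 add0r.
- by rewrite /B mulmxDl !T_mulr // yE zE.
Qed.

End Pair.


Lemma A_commX i : A *m A ^+ i = A ^+ i *m A.
Proof. by rewrite mulmxE -exprS exprSr. Qed.

Lemma nz_row p q (M : 'M[F]_(p, q)) : M != 0 -> exists i, row i M != 0.
Proof.
move=> nz; apply/existsP; move: nz; apply: contraR; rewrite negb_exists => /forallP h.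
by apply/eqP/row_matrixP => i; rewrite row0; apply/eqP; have := h i; rewrite negbK.
Qed.

Lemma nz_entry q (v : 'rV[F]_q) : v != 0 -> exists j, v 0 j != 0.
Proof.
move=> nz; apply/existsP; move: nz; apply: contraR; rewrite negb_exists => /forallP h.
by apply/eqP/rowP => j; rewrite [RHS]mxE; apply/eqP; have := h j; rewrite negbK.
Qed.

Lemma piece_ex E : E *m E = E -> A *m E = E *m A -> E != 0 -> (exists N, A ^+ N = 0) ->
  exists (m : nat) (g : 'rV[F]_n) (f : 'cV[F]_n), [/\ (0 < m)%N, g *m A ^+ m = 0, A ^+ m *m f = 0 &
    (g *m A ^+ m.-1 *m f) 0 0 != 0] /\ [/\ g *m E = g, E *m f = f,
    E *m A ^+ m = 0 & forall m' : nat, E *m A ^+ m' = 0 -> (m <= m')%N].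
Proof.
move=> iE cE Enz [N hN].
have ex : exists m, E *m A ^+ m == 0 by exists N; rewrite hN mulmx0.
case: (ex_minnP ex) => m /eqP hm hmin.
have m0 : (0 < m)%N.
  by case: m hm hmin => // ; rewrite expr0 mulmx1 => h; rewrite h eqxx in Enz.
have nzm : E *m A ^+ m.-1 != 0.
  apply/eqP => h; have := hmin _ (introT eqP h); lia.
have [i hi] := nz_row nzm.
pose g := row i E.
have gA k : g *m A ^+ k = row i (E *m A ^+ k) by rewrite row_mul.
have [j hj] : exists j, (g *m A ^+ m.-1) 0 j != 0 by apply: nz_entry; rewrite gA.
have gE : g *m E = g by rewrite /g -row_mul iE.
exists m, g, (E *m (delta_mx j 0 : 'cV_n)); split; split => //.
- by rewrite gA hm row0.
- by rewrite mulmxA commX // hm mul0mx.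
- rewrite mulmxA -[g *m _ *m E]mulmxA (commX _ cE) mulmxA gE.
  by rewrite -colE mxE.
- by rewrite mulmxA iE.
- move=> m' h; apply: hmin; exact/eqP.
Qed.

End Main.

Lemma halfE a : a = (odd a + a./2 + a./2)%N.
Proof. by rewrite -addnA addnn odd_double_half. Qed.

Lemma split_k k a r : (k.*2 <= a + r)%N -> ~~ (odd a && odd r) ->
  exists k1 k2, [/\ k = (k1 + k2)%N, (k1.*2 <= a)%N & (k2.*2 <= r)%N].
Proof.
move=> h o; exists (minn k a./2), (k - minn k a./2)%N.
have ea := halfE a; have er := halfE r.
move: o; case: (odd a) ea; case: (odd r) er => /= er ea // _; split; lia.
Qed.

Section Main2.
Variable F : fieldType.
Variable n : nat.
Variable A : 'M[F]_n.
Hypothesis nil : exists N, A ^+ N = 0.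

Lemma sub_facts (E E1 : 'M[F]_n) : E *m E = E -> A *m E = E *m A ->
  E1 *m E1 = E1 -> A *m E1 = E1 *m A -> E *m E1 = E1 -> E1 *m E = E1 ->
  let E' := E - E1 in
  [/\ E' *m E' = E', A *m E' = E' *m A, E1 *m E' = 0 & E' *m E1 = 0] /\
  [/\ E = E1 + E', E *m E' = E' & E' *m E = E'].
Proof.
move=> iE cE i1 c1 l1 r1 E'.
split; split; rewrite /E'.
- by rewrite mulmxBl !mulmxBr iE l1 r1 i1 subrr subr0.
- by rewrite mulmxBl mulmxBr cE c1.
- by rewrite mulmxBr r1 i1 subrr.
- by rewrite mulmxBl l1 i1 subrr.
- by rewrite addrC subrK.
- by rewrite mulmxBr iE l1.
- by rewrite mulmxBl iE r1.
Qed.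

Lemma main_Pk NN E : (\rank E < NN)%N -> E *m E = E -> A *m E = E *m A ->
  forall k, (k.*2 <= \rank E)%N -> Pk A E k.
Proof.
elim: NN E => [|NN IH] E hN; first by rewrite ltn0 in hN.
move=> iE cE k hk.
case: (eqVneq E 0) => [E0 | Enz].
  by move: hk; rewrite E0 mxrank0 leqn0 double_eq0 => /eqP ->; exact: Pk0.
have [a [g1 [f1 [[a0 Hg1 Hf1 Hnz1] [g1E Ef1 EAa mina]]]]] := piece_ex iE cE Enz nil.
set E1 := T A a g1 f1 g1.
have i1 : E1 *m E1 = E1 by exact: E1_idem.
have c1 : A *m E1 = E1 *m A by exact: E1_comm.
have r1 : \rank E1 = a by exact: E1_rank.
have l1 : E *m E1 = E1 by exact: outer_T.
have rr1 : E1 *m E = E1 by rewrite T_mulr // g1E.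
have [[i' c' o1' o'1] [dE l' r']] := sub_facts iE cE i1 c1 l1 rr1.
set E' := E - E1 in i' c' o1' o'1 dE l' r'.
have rE : \rank E = (a + \rank E')%N by rewrite {1}dE rank_idem_add // r1.
have E1Aa : E1 *m A ^+ a = 0 by rewrite T_mulr ?Hg1 ?T0 //; exact: A_commX.
have E'Aa : E' *m A ^+ a = 0 by rewrite /E' mulmxBl EAa E1Aa subrr.
case: (boolP (odd a && odd (\rank E'))) => [/andP [oa or'] | nodd].
  have E'nz : E' != 0 by apply: contraTneq or' => ->; rewrite mxrank0.
  have [b [g2 [f2 [[b0 Hg2 Hf2 Hnz2] [g2E Ef2 EAb minb]]]]] := piece_ex i' c' E'nz nil.
  set E2 := T A b g2 f2 g2.
  have i2 : E2 *m E2 = E2 by exact: E1_idem.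
  have c2 : A *m E2 = E2 *m A by exact: E1_comm.
  have r2 : \rank E2 = b by exact: E1_rank.
  have l2 : E' *m E2 = E2 by exact: outer_T.
  have rr2 : E2 *m E' = E2 by rewrite T_mulr // g2E.
  have [[i'' c'' o2'' o''2] [dE' l'' r'']] := sub_facts i' c' i2 c2 l2 rr2.
  set E'' := E' - E2 in i'' c'' o2'' o''2 dE' l'' r''.
  have rE' : \rank E' = (b + \rank E'')%N by rewrite {1}dE' rank_idem_add // r2.
  have ba : (b <= a)%N by exact: minb.
  have o12 : E1 *m E2 = 0 by rewrite -l2 mulmxA o1' mul0mx.
  have o21 : E2 *m E1 = 0 by rewrite -rr2 -mulmxA o'1 mulmx0.
  have o1'' : E1 *m E'' = 0 by rewrite /E'' mulmxBr o1' o12 subrr.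
  have o''1 : E'' *m E1 = 0 by rewrite /E'' mulmxBl o'1 o21 subrr.
  have dEE : E = E1 + E2 + E'' by rewrite dE {1}dE' addrA.
  have ltN : (\rank E'' < NN)%N by move: hN; rewrite rE rE'; lia.
  case: (boolP (odd b)) => ob.
    have ea := halfE a; have eb := halfE b; have er := halfE (\rank E'').
    move: or'; rewrite rE' oddD ob /= => /negPf or''.
    rewrite oa in ea; rewrite ob in eb; rewrite or'' in er.
    pose d := (a./2 - b./2)%N.
    have Hab : a = (b + d + d)%N by rewrite /d; lia.
    have Pk12 : forall k1, (k1 <= b + d)%N -> Pk A (E1 + E2) k1.
      move=> k1 hk1; case: (ltnP k1 (b + d)) => [lt|ge].
        have -> : k1 = (minn k1 a./2 + (k1 - minn k1 a./2))%N by lia.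
        apply: Pk_add => //; apply: cyc_Pk => //; lia.
      have -> : k1 = (b + d)%N by lia.
      exact: (pair_Pk Hg1 Hf1 Hnz1 Hg2 Hf2 Hnz2 b0 Hab).
    have -> : k = ((k - minn k (\rank E'')./2) + minn k (\rank E'')./2)%N by lia.
    rewrite dEE; apply: Pk_add.
    - by rewrite mulmxDl o1'' o2'' addr0.
    - by rewrite mulmxDr o''1 o''2 addr0.
    - apply: Pk12; move: hk; rewrite rE rE'; lia.
    - apply: IH => //; lia.
  have [k1 [k2 [-> hk1 hk2]]] : exists k1 k2,
      [/\ k = (k1 + k2)%N, (k1.*2 <= b)%N & (k2.*2 <= a + \rank E'')%N].
    apply: split_k; first by move: hk; rewrite rE rE'; lia.
    by rewrite (negPf ob).
  have dEE' : E = E2 + (E1 + E'') by rewrite dEE addrAC addrC.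
  rewrite dEE'; apply: Pk_add.
  - by rewrite mulmxDr o21 o2'' addr0.
  - by rewrite mulmxDl o12 o''2 addr0.
  - exact: cyc_Pk.
  - apply: IH.
    + by rewrite rank_idem_add // r1; move: hN; rewrite rE rE'; lia.
    + exact: idem_add.
    + by rewrite mulmxDr mulmxDl c1 c''.
    + by rewrite rank_idem_add // r1.
have hk' : (k.*2 <= a + \rank E')%N by rewrite -rE.
have [k1 [k2 [-> hk1 hk2]]] := split_k hk' nodd.
rewrite dE; apply: Pk_add => //; first exact: cyc_Pk.
apply: IH => //; move: hN; rewrite rE; lia.
Qed.

Lemma part1 k : (k.*2 <= n)%N -> exists B : 'M[F]_n,
  [/\ A *m B = B *m A, B *m B = 0 & \rank B = k].
Proof.
move=> hk.
have r1 : \rank (1%:M : 'M[F]_n) = n by rewrite mxrank1.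
have h1 : (\rank (1%:M : 'M[F]_n) < n.+1)%N by rewrite r1.
have h2 : A *m 1%:M = 1%:M *m A by rewrite mulmx1 mul1mx.
have h3 : (k.*2 <= \rank (1%:M : 'M[F]_n))%N by rewrite r1.
have [B [c s r _ _]] := @main_Pk (n.+1) 1%:M h1 (mulmx1 _) h2 k h3.
by exists B.
Qed.
End Main2.

Section Sim.
Variable F : fieldType.

Definition Ncan k l : 'M[F]_(k + (k + l)) :=
  block_mx 0 (row_mx 1%:M 0) 0 0.

Lemma disj_rank m1 m2 p (U : 'M[F]_(m1, p)) (V : 'M[F]_(m2, p)) (C : 'M[F]_p) :
  (U :&: V)%MS = 0 -> \rank (U + V)%MS = (\rank U + \rank V)%N.
Proof. by move=> h; rewrite mxrank_disjoint_sum. Qed.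

Lemma canon k l (X : 'M[F]_(k + (k + l))) : X *m X = 0 -> \rank X = k ->
  exists Q, Q \in unitmx /\ Q *m X = Ncan k l *m Q.
Proof.
move=> XX rX.
pose W : 'M_(k, k + (k + l)) := castmx (rX, erefl) (row_base X).
have eW : (W :=: X)%MS by apply: eqmx_trans (eqmx_cast _ _) (eq_row_base X).
have rW : \rank W = k by rewrite eW.
have WX : (W <= X)%MS by rewrite eW.
pose U := W *m pinvmx X.
have UX : U *m X = W by rewrite /U mulmxKpV.
have WX0 : W *m X = 0.
  by have [D ->] := submxP WX; rewrite -mulmxA XX mulmx0.
have Wker : (W <= kermx X)%MS by apply/sub_kermxP.
pose S := (kermx X :\: W)%MS.
have capW : (kermx X :&: W :=: W)%MS by apply/capmx_idPr.
have rS : \rank S = l.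
  have e1 := addsmx_diff_cap_eq (kermx X) W.
  have : \rank (S + (kermx X :&: W))%MS = (\rank S + k)%N.
    rewrite mxrank_disjoint_sum; first by rewrite capW rW.
    apply/eqP; rewrite -submx0.
    have := capmx_diff (kermx X) W; rewrite -/S => h0.
    apply: submx_trans (_ : (S :&: W <= 0)%MS); last by rewrite h0.
    by rewrite sub_capmx capmxSl /= (submx_trans (capmxSr _ _)) // capmxSr.
  rewrite e1 mxrank_ker rX; lia.
pose Z : 'M_(l, k + (k + l)) := castmx (rS, erefl) (row_base S).
have eZ : (Z :=: S)%MS by apply: eqmx_trans (eqmx_cast _ _) (eq_row_base S).
have ZX0 : Z *m X = 0 by apply/sub_kermxP; rewrite eZ diffmxSl.
pose Q := col_mx U (col_mx W Z).
exists Q; split.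
  rewrite -row_full_unit /row_full.
  have fW : row_free W by rewrite /row_free rW.
  have rU : \rank U = k.
    apply/eqP; rewrite eqn_leq rank_leq_row /=.
    by rewrite -{1}rW -UX mxrankM_maxl.
  have dWZ : (W :&: Z)%MS = 0.
    have h0 : (S :&: W)%MS = 0 := capmx_diff _ _.
    apply/eqP; rewrite -submx0 -h0 sub_capmx capmxSl andbT -eZ.
    exact: capmxSr.
  have WZker : (W + Z <= kermx X)%MS by rewrite addsmx_sub Wker eZ diffmxSl.
  have dU : (U :&: (W + Z))%MS = 0.
    apply/eqP; rewrite -submx0.
    have [D hD] := submxP (capmxSl U (W + Z)%MS).
    have : (U :&: (W + Z))%MS *m X = 0.
      by apply/sub_kermxP; apply: submx_trans (capmxSr _ _) WZker.
    rewrite hD -mulmxA UX => /eqP; rewrite mulmx_free_eq0 // => /eqP D0.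
    by rewrite D0 mul0mx sub0mx.
  have e : (U + col_mx W Z :=: U + (W + Z))%MS := adds_eqmx (eqmx_refl U) (eqmx_sym (addsmxE W Z)).
  by rewrite -addsmxE e mxrank_disjoint_sum // mxrank_disjoint_sum // rU rW eZ rS.
have -> : Ncan k l *m Q = col_mx W 0.
  by rewrite /Ncan /Q mul_block_col !mul0mx mul_row_col mul1mx mul0mx !addr0 add0r ?col_mx0.
by rewrite /Q !mul_col_mx UX WX0 ZX0 col_mx0.
Qed.

Lemma sim_sqz p (X Y : 'M[F]_p) : X *m X = 0 -> Y *m Y = 0 -> \rank X = \rank Y ->
  exists P, P \in unitmx /\ P *m X *m invmx P = Y.
Proof.
move=> XX YY rXY.
have hk : ((\rank X).*2 <= p)%N.
  have : (X <= kermx X)%MS by apply/sub_kermxP.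
  move/mxrankS; rewrite mxrank_ker; have := rank_leq_row X; lia.
have [k [l [e rk]]] : exists k l, p = (k + (k + l))%N /\ \rank X = k.
  by exists (\rank X), (p - (\rank X).*2)%N; split => //; lia.
subst p.
have [Qx [ux hx]] := canon XX rk.
have rkY : \rank Y = k by rewrite -rXY.
have [Qy [uy hy]] := canon YY rkY.
have iu : invmx Qy \in unitmx by rewrite unitmx_inv.
have hY : Y *m invmx Qy = invmx Qy *m Ncan k l.
  have := congr1 (fun M => invmx Qy *m M *m invmx Qy) hy => /=.
  by rewrite !mulmxA mulVmx // mul1mx -[_ *m Qy *m invmx Qy]mulmxA mulmxV // mulmx1.
pose P := invmx Qy *m Qx.
have uP : P \in unitmx by rewrite unitmx_mul iu ux.
have PX : P *m X = Y *m P.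
  by rewrite /P -mulmxA hx mulmxA -hY mulmxA.
exists P; split => //.
by rewrite PX -mulmxA mulmxV // mulmx1.
Qed.

End Sim.

Unset Implicit Arguments.

Theorem corollary2p5 (F : closedFieldType) (hchar : [pchar F] =i pred0) (n : nat) :
  (forall (A : 'M[F]_n), nilpotent_mx A ->
     forall k : nat, (k.*2 <= n)%N ->
     exists B : 'M[F]_n,
       [/\ A *m B = B *m A, B *m B = 0 & \rank B = k])
  /\
  (forall (A B : 'M[F]_n), nilpotent_mx A -> nilpotent_mx B ->
     forall k : nat, (k.*2 <= n)%N ->
     exists (C P : 'M[F]_n),
       [/\ C *m C = 0, \rank C = k, P \in unitmx,
           A *m C = C *m A &
           B *m (P *m C *m invmx P) = (P *m C *m invmx P) *m B]).
Proof.
split.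
  by move=> A nA k hk; exact: part1.
move=> A B nA nB k hk.
have [C [cA sC rC]] := part1 nA hk.
have [D [cB sD rD]] := part1 nB hk.
have [P [uP hP]] := sim_sqz sC sD (etrans rC (esym rD)).
by exists C, P; split => //; rewrite hP.
Qed.
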